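(* For an integer $k\ge 1$ let $\Gamma_k$ be the $k\times k$ grid graph (on $n=k^2$ vertices), and for an integer $n\ge 1$ let $S_n$ be the star on $n$ vertices (one center adjacent to $n-1$ leaves, no other edges). For $\rho>0$ let $\mathrm{HUDG}(\rho)$ be the class of graphs realizable as hyperbolic uniform disk graphs with radius $\rho$. Then: (i) $\Gamma_k\in\mathrm{HUDG}(1/n^3)$ for all $k$, where $n=k^2$; (ii) $S_n\notin\mathrm{HUDG}(1/n^3)$ for all $n\ge 8$; (iii) $\Gamma_k\notin\mathrm{HUDG}(\log n)$ for all $k\ge 5$, where $n=k^2$; (iv) $S_n\in\mathrm{HUDG}(\log n)$ for all $n$. Here $\log$ is the natural logarithm.
   Context: $\mathbb{H}^2$ denotes the hyperbolic plane of Gaussian curvature $-1$. A graph is a hyperbolic uniform disk graph with radius $\rho$ if it is isomorphic to the intersection graph of a finite family of closed hyperbolic disks of radius $\rho$ in $\mathbb{H}^2$, i.e., there are points (centers) assigned injectively to its vertices such that two vertices are adjacent iff their centers have hyperbolic distance at most $2\rho$. *)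

(* Defs.v *)
From Stdlib Require Import Reals Lra Lia.
Open Scope R_scope.

(* Model of H^2 (curvature -1): the Poincare upper half-plane. *)
Definition hpoint : Type := { p : R * R | 0 < snd p }.

Definition arcosh (u : R) : R := ln (u + sqrt (u * u - 1)).

Definition hdist (p q : hpoint) : R :=
  let '(x1, y1) := proj1_sig p in
  let '(x2, y2) := proj1_sig q in
  arcosh (1 + ((x1 - x2) ^ 2 + (y1 - y2) ^ 2) / (2 * y1 * y2)).

Definition HUDG (rho : R) (V : Type) (adj : V -> V -> Prop) : Prop :=
  exists f : V -> hpoint,
    (forall u v, f u = f v -> u = v) /\
    (forall u v, u <> v -> (adj u v <-> hdist (f u) (f v) <= 2 * rho)).

Definition grid_vertex (k : nat) : Type :=
  { p : nat * nat | (fst p < k)%nat /\ (snd p < k)%nat }.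

Definition grid_adj (k : nat) (u v : grid_vertex k) : Prop :=
  let '(a, b) := proj1_sig u in
  let '(c, d) := proj1_sig v in
  (a = c /\ (b = S d \/ d = S b)) \/ (b = d /\ (a = S c \/ c = S a)).

Definition star_vertex (n : nat) : Type := { i : nat | (i < n)%nat }.

Definition star_adj (n : nat) (u v : star_vertex n) : Prop :=
  proj1_sig u <> proj1_sig v /\ (proj1_sig u = 0%nat \/ proj1_sig v = 0%nat).

(* Main.v *)
Require Import Defs.
From Stdlib Require Import Reals Lra Lia ZArith ProofIrrelevance.
From Stdlib Require Classical_Prop.
Open Scope R_scope.

Definition Kc (r : R) : R := (exp r + exp (- r)) / 2.

Definition Aarg (p q : hpoint) : R :=
  let '(x1, y1) := proj1_sig p in
  let '(x2, y2) := proj1_sig q in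
  1 + ((x1 - x2) ^ 2 + (y1 - y2) ^ 2) / (2 * y1 * y2).

Lemma hdist_Aarg p q : hdist p q = arcosh (Aarg p q).
Proof. destruct p as [[x1 y1] H1]; destruct q as [[x2 y2] H2]; reflexivity. Qed.

Lemma Aarg_ge1 p q : 1 <= Aarg p q.
Proof.
  destruct p as [[x1 y1] H1]; destruct q as [[x2 y2] H2]; simpl in *.
  assert (0 <= ((x1 - x2) ^ 2 + (y1 - y2) ^ 2) / (2 * y1 * y2)).
  { apply Rmult_le_pos. pose proof (pow2_ge_0 (x1-x2)); pose proof (pow2_ge_0 (y1-y2)); lra. left; apply Rinv_0_lt_compat; nra. }
  unfold Aarg; simpl; lra.
Qed.

Lemma ln_le_iff v c : 0 < v -> (ln v <= c <-> v <= exp c).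
Proof.
  intros Hv; split; intro H.
  - destruct (Rle_lt_dec v (exp c)) as [h|h]; auto.
    exfalso. assert (ln (exp c) < ln v) by (apply ln_increasing; auto; apply exp_pos).
    rewrite ln_exp in H0; lra.
  - destruct (Rle_lt_dec (ln v) c) as [h|h]; auto.
    exfalso. assert (exp c < exp (ln v)) by (apply exp_increasing; auto).
    rewrite exp_ln in H0; lra.
Qed.

Lemma arcosh_le u c : 1 <= u -> 0 <= c -> (arcosh u <= c <-> u <= Kc c).
Proof.
  intros Hu Hc. unfold arcosh, Kc.
  set (s := sqrt (u * u - 1)).
  assert (Hs0 : 0 <= s) by apply sqrt_pos.
  assert (Hs2 : s * s = u * u - 1) by (apply sqrt_sqrt; nra).
  set (v := u + s).
  assert (Hv : 1 <= v) by (unfold v; lra).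
  assert (Hinv : / v = u - s).
  { unfold v. field_simplify_eq. nra. lra. }
  rewrite (ln_le_iff v c) by lra.
  rewrite exp_Ropp.
  set (E := exp c).
  assert (HE : 1 <= E).
  { unfold E. destruct Hc as [Hc|Hc]. left; rewrite <- exp_0; apply exp_increasing; auto.
    subst; rewrite exp_0; lra. }
  assert (Hu2 : u = (v + / v) / 2) by (rewrite Hinv; unfold v; lra).
  rewrite Hu2.
  assert (key : (E + / E) - (v + / v) = (E - v) * (E * v - 1) / (E * v)).
  { field. lra. }
  split; intro H.
  - assert (0 <= (E - v) * (E * v - 1) / (E * v)).
    { apply Rmult_le_pos. apply Rmult_le_pos; nra. left; apply Rinv_0_lt_compat; nra. }
    lra.
  - destruct (Rle_lt_dec v E) as [h|h]; auto. exfalso.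
    assert (0 < (v - E) * (E * v - 1) / (E * v)).
    { apply Rmult_lt_0_compat. apply Rmult_lt_0_compat; nra. apply Rinv_0_lt_compat; nra. }
    assert ((E - v) * (E * v - 1) / (E * v) = - ((v - E) * (E * v - 1) / (E * v))) by (field; lra).
    lra.
Qed.

Lemma adj_iff p q r : 0 <= r -> (hdist p q <= 2 * r <-> Aarg p q <= Kc (2 * r)).
Proof. intros. rewrite hdist_Aarg. apply arcosh_le. apply Aarg_ge1. lra. Qed.
Definition px (p : hpoint) := fst (proj1_sig p).
Definition py (p : hpoint) := snd (proj1_sig p).
Lemma py_pos p : 0 < py p. Proof. exact (proj2_sig p). Qed.

Lemma Aarg_eq p q : Aarg p q = 1 + ((px p - px q) ^ 2 + (py p - py q) ^ 2) / (2 * py p * py q).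
Proof. destruct p as [[x1 y1] H1]; destruct q as [[x2 y2] H2]; reflexivity. Qed.

Section Rel.
Variable c : hpoint.
Definition rX p := (px p - px c) / py c.
Definition rY p := py p / py c.
Definition tt p := (rX p ^ 2 + rY p ^ 2 + 1) / (2 * rY p).
Definition w1 p := rX p / rY p.
Definition w2 p := (rX p ^ 2 + rY p ^ 2 - 1) / (2 * rY p).

Lemma rY_pos p : 0 < rY p.
Proof. unfold rY. pose proof (py_pos p); pose proof (py_pos c). apply Rdiv_lt_0_compat; auto. Qed.

Lemma Aarg_rel p q : Aarg p q = tt p * tt q - (w1 p * w1 q + w2 p * w2 q).
Proof.
  rewrite Aarg_eq. unfold tt, w1, w2, rX, rY.
  pose proof (py_pos p); pose proof (py_pos q); pose proof (py_pos c).
  field. repeat split; lra.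
Qed.

Lemma tt_sq p : tt p * tt p = 1 + (w1 p * w1 p + w2 p * w2 p).
Proof. unfold tt, w1, w2. pose proof (rY_pos p). field. lra. Qed.

Lemma tt_Aarg p : tt p = Aarg c p.
Proof.
  rewrite Aarg_eq. unfold tt, rX, rY.
  pose proof (py_pos p); pose proof (py_pos c).
  field. lra.
Qed.

Lemma tt_pos p : 1 <= tt p.
Proof.
  unfold tt. pose proof (rY_pos p).
  apply (Rmult_le_reg_r (2 * rY p)). lra.
  field_simplify; try lra. pose proof (pow2_ge_0 (rX p)). pose proof (pow2_ge_0 (rY p - 1)).
  nra.
Qed.

Lemma w_zero p : w1 p = 0 -> w2 p = 0 -> p = c.
Proof.
  intros h1 h2. unfold w1, w2 in *. pose proof (rY_pos p).
  assert (hx : rX p = 0).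
  { unfold Rdiv in h1. apply Rmult_integral in h1. destruct h1 as [h|h]; auto.
    exfalso. apply Rinv_neq_0_compat in h; lra. }
  assert (hy : rY p = 1).
  { unfold Rdiv in h2. apply Rmult_integral in h2. destruct h2 as [h|h].
    rewrite hx in h. nra. exfalso. apply Rinv_neq_0_compat in h. lra. lra. }
  unfold rX, rY in *. pose proof (py_pos c).
  assert (ex : px p = px c).
  { unfold Rdiv in hx. apply Rmult_integral in hx. destruct hx as [h|h]. lra.
    exfalso. apply Rinv_neq_0_compat in h. lra. lra. }
  assert (ey : py p = py c).
  { apply (Rmult_eq_reg_r (/ py c)). unfold Rdiv in hy. rewrite hy. field. lra.
    apply Rinv_neq_0_compat; lra. }
  destruct p as [[x y] Hp]; destruct c as [[x0 y0] Hc]. unfold px, py in *; simpl in *.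
  subst. f_equal. apply proof_irrelevance.
Qed.
End Rel.
Fixpoint sumn (n : nat) (g : nat -> R) : R :=
  match n with O => 0 | S m => sumn m g + g m end.

Lemma sumn_le_one n g i : (i < n)%nat -> (forall j, (j < n)%nat -> j <> i -> g j <= 0) ->
  sumn n g <= g i.
Proof.
  induction n as [|n IH]; intros Hi Hg; [lia|]. simpl.
  destruct (Nat.eq_dec i n) as [->|ne].
  - assert (sumn n g <= 0).
    { clear IH Hi. assert (forall j, (j < n)%nat -> g j <= 0) by (intros; apply Hg; lia).
      clear Hg. induction n; simpl; [lra|].
      assert (g n <= 0) by (apply H; lia). assert (sumn n g <= 0) by (apply IHn; intros; apply H; lia). lra. }
    lra.
  - assert (sumn n g <= g i) by (apply IH; [lia| intros; apply Hg; lia]).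
    assert (g n <= 0) by (apply Hg; lia). lra.
Qed.

Lemma sumn_mono n g h : (forall j, (j < n)%nat -> g j <= h j) -> sumn n g <= sumn n h.
Proof.
  induction n; intros H; simpl; [lra|].
  assert (sumn n g <= sumn n h) by (apply IHn; intros; apply H; lia).
  assert (g n <= h n) by (apply H; lia). lra.
Qed.

Lemma sum7_sq (P Q : nat -> R) :
  sumn 7 (fun i => sumn 7 (fun j => P i * P j + Q i * Q j)) = (sumn 7 P) ^ 2 + (sumn 7 Q) ^ 2.
Proof. simpl. ring. Qed.

Lemma sum7_lin (c0 c1 c2 c3 c4 : R) (Z1 Z2 Z3 Z4 : nat -> nat -> R) :
  sumn 7 (fun i => sumn 7 (fun j => c0 + c1 * Z1 i j + c2 * Z2 i j + c3 * Z3 i j + c4 * Z4 i j))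
  = 49 * c0 + c1 * sumn 7 (fun i => sumn 7 (Z1 i)) + c2 * sumn 7 (fun i => sumn 7 (Z2 i))
    + c3 * sumn 7 (fun i => sumn 7 (Z3 i)) + c4 * sumn 7 (fun i => sumn 7 (Z4 i)).
Proof. simpl. ring. Qed.

Definition fpoly (c : R) := (c - 11/20) * (c + 1/2) ^ 2 * (c + 1).

Section Seven.
Variables a b : nat -> R.
Definition P2 i := a i ^ 2 - b i ^ 2.
Definition Q2 i := 2 * a i * b i.
Definition P3 i := a i ^ 3 - 3 * a i * b i ^ 2.
Definition Q3 i := 3 * a i ^ 2 * b i - b i ^ 3.
Definition P4 i := a i ^ 4 - 6 * a i ^ 2 * b i ^ 2 + b i ^ 4.
Definition Q4 i := 4 * a i ^ 3 * b i - 4 * a i * b i ^ 3.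
Definition dt i j := a i * a j + b i * b j.

Lemma fpoly_decomp i j : a i ^ 2 + b i ^ 2 = 1 -> a j ^ 2 + b j ^ 2 = 1 ->
  fpoly (dt i j) = 5/16 + 13/20 * dt i j + 23/40 * (P2 i * P2 j + Q2 i * Q2 j)
     + 29/80 * (P3 i * P3 j + Q3 i * Q3 j) + 1/8 * (P4 i * P4 j + Q4 i * Q4 j).
Proof.
  intros Hi Hj.
  assert (E2 : P2 i * P2 j + Q2 i * Q2 j = 2 * dt i j ^ 2 - (a i ^ 2 + b i ^ 2) * (a j ^ 2 + b j ^ 2))
    by (unfold P2, Q2, dt; ring).
  assert (E3 : P3 i * P3 j + Q3 i * Q3 j = 4 * dt i j ^ 3 - 3 * dt i j * (a i ^ 2 + b i ^ 2) * (a j ^ 2 + b j ^ 2))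
    by (unfold P3, Q3, dt; ring).
  assert (E4 : P4 i * P4 j + Q4 i * Q4 j = 8 * dt i j ^ 4 - 8 * dt i j ^ 2 * (a i ^ 2 + b i ^ 2) * (a j ^ 2 + b j ^ 2)
     + ((a i ^ 2 + b i ^ 2) * (a j ^ 2 + b j ^ 2)) ^ 2)
    by (unfold P4, Q4, dt; ring).
  rewrite E2, E3, E4, Hi, Hj. unfold fpoly. field.
Qed.

Lemma seven_contra :
  (forall i, (i < 7)%nat -> a i ^ 2 + b i ^ 2 = 1) ->
  (forall i j, (i < 7)%nat -> (j < 7)%nat -> i <> j -> dt i j < 11/20) -> False.
Proof.
  intros Hu Hd.
  set (F := fun i j => fpoly (dt i j)).
  assert (up : sumn 7 (fun i => sumn 7 (F i)) <= sumn 7 (fun i => 81/40)).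
  { apply sumn_mono. intros i Hi.
    assert (F i i = 81/40).
    { unfold F, fpoly, dt. assert (a i * a i + b i * b i = 1) by (rewrite <- (Hu i Hi); ring).
      rewrite H. field. }
    rewrite <- H. apply sumn_le_one; auto. intros j Hj ne. unfold F, fpoly.
    assert (dt i j < 11/20) by (apply Hd; auto).
    assert (-1 <= dt i j).
    { unfold dt. pose proof (Hu i Hi); pose proof (Hu j Hj).
      pose proof (pow2_ge_0 (a i + a j)); pose proof (pow2_ge_0 (b i + b j)). nra. }
    pose proof (pow2_ge_0 (dt i j + 1/2)).
    assert (0 <= (dt i j + 1/2) ^ 2 * (dt i j + 1)) by (apply Rmult_le_pos; lra).
    nra. }
  assert (eq : sumn 7 (fun i => sumn 7 (F i)) =
     sumn 7 (fun i => sumn 7 (fun j => 5/16 + 13/20 * (a i * a j + b i * b j) + 23/40 * (P2 i * P2 j + Q2 i * Q2 j)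
     + 29/80 * (P3 i * P3 j + Q3 i * Q3 j) + 1/8 * (P4 i * P4 j + Q4 i * Q4 j)))).
  { unfold F. simpl.
    repeat rewrite fpoly_decomp by (apply Hu; lia). unfold dt. reflexivity. }
  rewrite eq in up.
  rewrite (sum7_lin _ _ _ _ _ (fun i j => a i * a j + b i * b j) (fun i j => P2 i * P2 j + Q2 i * Q2 j)
     (fun i j => P3 i * P3 j + Q3 i * Q3 j) (fun i j => P4 i * P4 j + Q4 i * Q4 j)) in up.
  cbv beta in up. rewrite !sum7_sq in up.
  replace (sumn 7 (fun _ => 81/40)) with (7 * (81/40)) in up by (simpl; ring).
  pose proof (pow2_ge_0 (sumn 7 a)). pose proof (pow2_ge_0 (sumn 7 b)).
  pose proof (pow2_ge_0 (sumn 7 P2)). pose proof (pow2_ge_0 (sumn 7 Q2)).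
  pose proof (pow2_ge_0 (sumn 7 P3)). pose proof (pow2_ge_0 (sumn 7 Q3)).
  pose proof (pow2_ge_0 (sumn 7 P4)). pose proof (pow2_ge_0 (sumn 7 Q4)).
  lra.
Qed.
End Seven.
Lemma abs_lt_split x c : Rabs x < c -> - c < x /\ x < c.
Proof. intros. split; [apply Rabs_def2 in H; lra| apply Rabs_def2 in H; lra]. Qed.
Lemma abs_gt_split x g : Rabs x > g -> x > g \/ x < - g.
Proof. intros. destruct (Rcase_abs x); [rewrite Rabs_left in H by lra | rewrite Rabs_right in H by lra]; lra. Qed.

Lemma line4 (T1 T2 T3 T4 a1 a2 a3 a4 g12 g13 g14 g23 g24 g34 : R) :
  Rabs (T1 - T2) < a1 + a2 -> Rabs (T2 - T3) < a2 + a3 ->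
  Rabs (T3 - T4) < a3 + a4 -> Rabs (T4 - T1) < a4 + a1 ->
  Rabs (T1 - T2) > g12 -> Rabs (T1 - T3) > g13 -> Rabs (T1 - T4) > g14 ->
  Rabs (T2 - T3) > g23 -> Rabs (T2 - T4) > g24 -> Rabs (T3 - T4) > g34 ->
  a1 <= g12 -> a2 <= g12 -> a1 <= g13 -> a3 <= g13 -> a1 <= g14 -> a4 <= g14 ->
  a2 <= g23 -> a3 <= g23 -> a2 <= g24 -> a4 <= g24 -> a3 <= g34 -> a4 <= g34 ->
  0 <= a1 -> 0 <= a2 -> 0 <= a3 -> 0 <= a4 -> False.
Proof.
  intros c1 c2 c3 c4 f12 f13 f14 f23 f24 f34; intros.
  apply abs_lt_split in c1; apply abs_lt_split in c2; apply abs_lt_split in c3; apply abs_lt_split in c4.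
  apply abs_gt_split in f12; apply abs_gt_split in f13; apply abs_gt_split in f14;
  apply abs_gt_split in f23; apply abs_gt_split in f24; apply abs_gt_split in f34.
  destruct f12; destruct f13; destruct f14; destruct f23; destruct f24; destruct f34; lra.
Qed.

Definition close (th ps al : R) := exists k : Z, Rabs (th - ps - 2 * IZR k * PI) < al.
Definition far (th ps g : R) := forall k : Z, Rabs (th - ps - 2 * IZR k * PI) > g.

Lemma close_trans a b c x y : close a b x -> close b c y -> close a c (x + y).
Proof.
  intros [k1 H1] [k2 H2]. exists (k1 + k2)%Z. rewrite plus_IZR.
  replace (a - c - 2 * (IZR k1 + IZR k2) * PI) with ((a - b - 2 * IZR k1 * PI) + (b - c - 2 * IZR k2 * PI)) by ring.
  eapply Rle_lt_trans. apply Rabs_triang. lra.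
Qed.

Lemma far_sym a b g : far a b g -> far b a g.
Proof.
  intros H k. specialize (H (- k)%Z). rewrite opp_IZR in H.
  replace (b - a - 2 * IZR k * PI) with (- (a - b - 2 * - IZR k * PI)) by ring.
  rewrite Rabs_Ropp; auto.
Qed.

Lemma int_small (m : Z) : Rabs (IZR m) < 1 -> m = 0%Z.
Proof.
  intros H. apply abs_lt_split in H. destruct H.
  assert (-1 < m)%Z by (apply lt_IZR; simpl; lra).
  assert (m < 1)%Z by (apply lt_IZR; simpl; lra). lia.
Qed.

Lemma circle4 (t1 t2 t3 t4 a1 a2 a3 a4 g12 g13 g14 g23 g24 g34 : R) :
  a1 + a2 + a3 + a4 < PI ->
  close t1 t2 (a1 + a2) -> close t2 t3 (a2 + a3) -> close t3 t4 (a3 + a4) -> close t4 t1 (a4 + a1) ->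
  far t1 t2 g12 -> far t1 t3 g13 -> far t1 t4 g14 -> far t2 t3 g23 -> far t2 t4 g24 -> far t3 t4 g34 ->
  a1 <= g12 -> a2 <= g12 -> a1 <= g13 -> a3 <= g13 -> a1 <= g14 -> a4 <= g14 ->
  a2 <= g23 -> a3 <= g23 -> a2 <= g24 -> a4 <= g24 -> a3 <= g34 -> a4 <= g34 ->
  0 <= a1 -> 0 <= a2 -> 0 <= a3 -> 0 <= a4 -> False.
Proof.
  intros Hs [k1 c1] [k2 c2] [k3 c3] [k4 c4] f12 f13 f14 f23 f24 f34; intros.
  pose proof PI_RGT_0.
  assert (m0 : (k1 + k2 + k3 + k4 = 0)%Z).
  { apply int_small. apply abs_lt_split in c1; apply abs_lt_split in c2;
    apply abs_lt_split in c3; apply abs_lt_split in c4.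
    rewrite !plus_IZR. apply Rabs_def1.
    - apply (Rmult_lt_reg_l (2 * PI)). lra. nra.
    - apply (Rmult_lt_reg_l (2 * PI)). lra. nra. }
  assert (E4 : IZR k4 = - (IZR k1 + IZR k2 + IZR k3)).
  { assert (hz : IZR (k1 + k2 + k3 + k4) = 0) by (rewrite m0; reflexivity). rewrite !plus_IZR in hz. lra. }
  apply (line4 t1 (t2 + 2 * IZR k1 * PI) (t3 + 2 * (IZR k1 + IZR k2) * PI)
           (t4 + 2 * (IZR k1 + IZR k2 + IZR k3) * PI) a1 a2 a3 a4 g12 g13 g14 g23 g24 g34); auto.
  - replace (t1 - (t2 + 2 * IZR k1 * PI)) with (t1 - t2 - 2 * IZR k1 * PI) by ring; auto.
  - replace (t2 + 2 * IZR k1 * PI - (t3 + 2 * (IZR k1 + IZR k2) * PI)) with (t2 - t3 - 2 * IZR k2 * PI) by ring; auto.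
  - replace (t3 + 2 * (IZR k1 + IZR k2) * PI - (t4 + 2 * (IZR k1 + IZR k2 + IZR k3) * PI)) with (t3 - t4 - 2 * IZR k3 * PI) by ring; auto.
  - replace (t4 + 2 * (IZR k1 + IZR k2 + IZR k3) * PI - t1) with (t4 - t1 - 2 * IZR k4 * PI) by (rewrite E4; ring); auto.
  - replace (t1 - (t2 + 2 * IZR k1 * PI)) with (t1 - t2 - 2 * IZR k1 * PI) by ring; auto.
  - replace (t1 - (t3 + 2 * (IZR k1 + IZR k2) * PI)) with (t1 - t3 - 2 * IZR (k1 + k2) * PI) by (rewrite plus_IZR; ring); auto.
  - replace (t1 - (t4 + 2 * (IZR k1 + IZR k2 + IZR k3) * PI)) with (t1 - t4 - 2 * IZR (k1 + k2 + k3) * PI) by (rewrite !plus_IZR; ring); auto.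
  - replace (t2 + 2 * IZR k1 * PI - (t3 + 2 * (IZR k1 + IZR k2) * PI)) with (t2 - t3 - 2 * IZR k2 * PI) by ring; auto.
  - replace (t2 + 2 * IZR k1 * PI - (t4 + 2 * (IZR k1 + IZR k2 + IZR k3) * PI)) with (t2 - t4 - 2 * IZR (k2 + k3) * PI) by (rewrite !plus_IZR; ring); auto.
  - replace (t3 + 2 * (IZR k1 + IZR k2) * PI - (t4 + 2 * (IZR k1 + IZR k2 + IZR k3) * PI)) with (t3 - t4 - 2 * IZR k3 * PI) by ring; auto.
Qed.

Lemma cos_period_nat x n : cos (x - 2 * INR n * PI) = cos x.
Proof. rewrite <- (cos_period (x - 2 * INR n * PI) n). f_equal. ring. Qed.

Lemma cos_periodZ x k : cos (x - 2 * IZR k * PI) = cos x.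
Proof.
  destruct k as [|p|p].
  - simpl. f_equal. ring.
  - assert (e : IZR (Z.pos p) = INR (Pos.to_nat p)) by (rewrite INR_IZR_INZ, positive_nat_Z; reflexivity).
    rewrite e. apply cos_period_nat.
  - assert (e : IZR (Z.neg p) = - INR (Pos.to_nat p)) by (rewrite INR_IZR_INZ, positive_nat_Z, <- opp_IZR; reflexivity).
    rewrite e.
    replace (x - 2 * - INR (Pos.to_nat p) * PI) with (x + 2 * INR (Pos.to_nat p) * PI) by ring.
    apply cos_period.
Qed.

Lemma acos_le x y : -1 <= x -> x <= y -> y <= 1 -> acos y <= acos x.
Proof.
  intros. destruct (Rle_lt_dec (acos y) (acos x)) as [h|h]; auto. exfalso.
  pose proof (acos_bound x); pose proof (acos_bound y).
  assert (cos (acos y) < cos (acos x)) by (apply cos_decreasing_1; lra).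
  rewrite !cos_acos in H4 by lra. lra.
Qed.

Lemma acos_lt x y : -1 <= x -> x < y -> y <= 1 -> acos y < acos x.
Proof.
  intros. destruct (Rle_lt_dec (acos x) (acos y)) as [h|h]; auto. exfalso.
  destruct h as [h|h].
  - pose proof (acos_bound x); pose proof (acos_bound y).
    assert (cos (acos y) < cos (acos x)) by (apply cos_decreasing_1; lra).
    rewrite !cos_acos in H4 by lra. lra.
  - assert (cos (acos x) = cos (acos y)) by (rewrite h; auto).
    rewrite !cos_acos in H2 by lra. lra.
Qed.

Definition ang (a b : R) := if Rle_dec 0 b then acos a else - acos a.

Lemma ang_spec a b : a ^ 2 + b ^ 2 = 1 -> cos (ang a b) = a /\ sin (ang a b) = b /\ - PI <= ang a b <= PI.
Proof.
  intros H. assert (ha : -1 <= a <= 1) by (split; nra).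
  pose proof (acos_bound a).
  assert (sq : sqrt (1 - a²) = Rabs b).
  { rewrite <- sqrt_Rsqr_abs. f_equal. unfold Rsqr. lra. }
  unfold ang. destruct (Rle_dec 0 b).
  - rewrite cos_acos by lra. rewrite sin_acos by lra. rewrite sq, Rabs_right by lra. split; [|split]; lra.
  - rewrite cos_neg, sin_neg, cos_acos by lra. rewrite sin_acos by lra. rewrite sq, Rabs_left by lra.
    split; [|split]; lra.
Qed.

Lemma close_of_cos th ps c : - PI <= th <= PI -> - PI <= ps <= PI -> -1 <= c <= 1 ->
  cos (th - ps) > c -> close th ps (acos c).
Proof.
  intros Ht Hp Hc Hcos. pose proof PI_RGT_0.
  assert (ex : exists k : Z, - PI <= th - ps - 2 * IZR k * PI <= PI).
  { destruct (Rle_lt_dec (th - ps) PI).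
    - destruct (Rle_lt_dec (- PI) (th - ps)).
      + exists 0%Z. simpl. lra.
      + exists (-1)%Z. simpl. lra.
    - exists 1%Z. simpl. lra. }
  destruct ex as [k Hk]. exists k.
  set (y := th - ps - 2 * IZR k * PI) in *.
  assert (cy : cos y = cos (th - ps)) by (unfold y; apply cos_periodZ).
  assert (ca : cos (Rabs y) = cos y).
  { destruct (Rcase_abs y); [rewrite Rabs_left by lra; apply cos_neg | rewrite Rabs_right by lra; auto]. }
  pose proof (acos_bound c).
  apply (cos_decreasing_0 (acos c) (Rabs y)).
  - lra. - lra. - apply Rabs_pos. - apply Rabs_le; lra.
  - rewrite cos_acos by lra. lra.
Qed.

Lemma far_of_cos th ps c : -1 <= c <= 1 -> cos (th - ps) < c -> far th ps (acos c).
Proof.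
  intros Hc Hcos k. pose proof PI_RGT_0.
  set (y := th - ps - 2 * IZR k * PI).
  assert (cy : cos y = cos (th - ps)) by (unfold y; apply cos_periodZ).
  assert (ca : cos (Rabs y) = cos y).
  { destruct (Rcase_abs y); [rewrite Rabs_left by lra; apply cos_neg | rewrite Rabs_right by lra; auto]. }
  pose proof (acos_bound c).
  destruct (Rlt_le_dec (acos c) (Rabs y)) as [h|h]; [lra|]. exfalso.
  destruct h as [h|h].
  - assert (cos (acos c) < cos (Rabs y)) by (apply cos_decreasing_1; try lra; apply Rabs_pos).
    rewrite cos_acos in H1 by lra. lra.
  - assert (cos (Rabs y) = c) by (rewrite h; apply cos_acos; lra). lra.
Qed.
Definition cf (K t : R) := K * (t - 1) / (sqrt (K * K - 1) * sqrt (t * t - 1)).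

Lemma sqrt_sq_eq x : 0 <= x -> sqrt x * sqrt x = x.
Proof. apply sqrt_sqrt. Qed.

Lemma gpoly_id K a t :
  (t * a - K) ^ 2 * (K * K - 1) - K ^ 2 * (a - 1) ^ 2 * (t * t - 1)
  = (t - K) * ((2 * K ^ 2 * a - a ^ 2 - K ^ 2) * (t - K) + 2 * K * (a - 1) * (K ^ 2 - a)).
Proof. ring. Qed.

Lemma pos_sq_lt X Y : 0 < Y -> Y * Y < X * X -> 0 < X -> Y < X.
Proof. intros. nra. Qed.

Lemma corner_ineq K ti tQ : 1 < K -> 1 < ti -> ti <= K -> K < tQ ->
  (tQ * ti - K) / (sqrt (tQ * tQ - 1) * sqrt (ti * ti - 1)) > cf K ti.
Proof.
  intros HK Hi HiK HQ. unfold cf.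
  set (sQ := sqrt (tQ * tQ - 1)). set (si := sqrt (ti * ti - 1)). set (sK := sqrt (K * K - 1)).
  assert (hsQ : 0 < sQ) by (apply sqrt_lt_R0; nra).
  assert (hsi : 0 < si) by (apply sqrt_lt_R0; nra).
  assert (hsK : 0 < sK) by (apply sqrt_lt_R0; nra).
  assert (eQ : sQ * sQ = tQ * tQ - 1) by (apply sqrt_sqrt; nra).
  assert (ei : si * si = ti * ti - 1) by (apply sqrt_sqrt; nra).
  assert (eK : sK * sK = K * K - 1) by (apply sqrt_sqrt; nra).
  assert (key : K * (ti - 1) * sQ < (tQ * ti - K) * sK).
  { apply pos_sq_lt. apply Rmult_lt_0_compat; [nra|lra].
    2: { apply Rmult_lt_0_compat; [nra|lra]. }
    replace (K * (ti - 1) * sQ * (K * (ti - 1) * sQ)) with (K ^ 2 * (ti - 1) ^ 2 * (tQ * tQ - 1))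
      by (rewrite <- eQ; ring).
    replace ((tQ * ti - K) * sK * ((tQ * ti - K) * sK)) with ((tQ * ti - K) ^ 2 * (K * K - 1))
      by (rewrite <- eK; ring).
    assert (0 < (tQ - K) * ((2 * K ^ 2 * ti - ti ^ 2 - K ^ 2) * (tQ - K) + 2 * K * (ti - 1) * (K ^ 2 - ti))).
    { apply Rmult_lt_0_compat; [lra|].
      assert (0 < 2 * K ^ 2 * ti - ti ^ 2 - K ^ 2) by nra.
      assert (0 <= 2 * K * (ti - 1) * (K ^ 2 - ti)).
      { apply Rmult_le_pos; [nra|]. nra. }
      nra. }
    rewrite <- gpoly_id in H. lra. }
  apply Rlt_gt.
  apply (Rmult_lt_reg_r (sK * sQ * si)). repeat apply Rmult_lt_0_compat; auto.
  replace (K * (ti - 1) / (sK * si) * (sK * sQ * si)) with (K * (ti - 1) * sQ) by (field; lra).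
  replace ((tQ * ti - K) / (sQ * si) * (sK * sQ * si)) with ((tQ * ti - K) * sK) by (field; lra).
  auto.
Qed.

Lemma beta_le_cf K ti tj : 1 < K -> 1 < ti -> ti <= K -> 1 < tj -> tj <= K ->
  (ti * tj - K) / (sqrt (ti * ti - 1) * sqrt (tj * tj - 1)) <= cf K ti.
Proof.
  intros HK Hi HiK Hj HjK. unfold cf.
  set (sj := sqrt (tj * tj - 1)). set (si := sqrt (ti * ti - 1)). set (sK := sqrt (K * K - 1)).
  assert (hsj : 0 < sj) by (apply sqrt_lt_R0; nra).
  assert (hsi : 0 < si) by (apply sqrt_lt_R0; nra).
  assert (hsK : 0 < sK) by (apply sqrt_lt_R0; nra).
  assert (ej : sj * sj = tj * tj - 1) by (apply sqrt_sqrt; nra).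
  assert (ei : si * si = ti * ti - 1) by (apply sqrt_sqrt; nra).
  assert (eK : sK * sK = K * K - 1) by (apply sqrt_sqrt; nra).
  assert (key : (ti * tj - K) * sK <= K * (ti - 1) * sj).
  { destruct (Rle_lt_dec (ti * tj - K) 0) as [h|h].
    - assert (0 <= K * (ti - 1) * sj) by (apply Rmult_le_pos; nra). nra.
    - assert (0 <= K * (ti - 1) * sj) by (apply Rmult_le_pos; nra).
      assert (0 < (ti * tj - K) * sK) by nra.
      assert (sqle : (ti * tj - K) * sK * ((ti * tj - K) * sK) <= K * (ti - 1) * sj * (K * (ti - 1) * sj)).
      { replace (K * (ti - 1) * sj * (K * (ti - 1) * sj)) with (K ^ 2 * (ti - 1) ^ 2 * (tj * tj - 1))
          by (rewrite <- ej; ring).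
        replace ((ti * tj - K) * sK * ((ti * tj - K) * sK)) with ((tj * ti - K) ^ 2 * (K * K - 1))
          by (rewrite <- eK; ring).
        assert (coef : 0 < 2 * K ^ 2 * ti - ti ^ 2 - K ^ 2) by nra.
        assert (hh : 0 <= ti * ((2 * K ^ 2 * ti - ti ^ 2 - K ^ 2) * (tj - K) + 2 * K * (ti - 1) * (K ^ 2 - ti))).
        { replace (ti * ((2 * K ^ 2 * ti - ti ^ 2 - K ^ 2) * (tj - K) + 2 * K * (ti - 1) * (K ^ 2 - ti)))
            with (K * (ti - 1) * (K ^ 2 - ti ^ 2) + (2 * K ^ 2 * ti - ti ^ 2 - K ^ 2) * (ti * tj - K)) by ring.
          assert (0 <= K * (ti - 1) * (K ^ 2 - ti ^ 2)).
          { apply Rmult_le_pos; [nra|]. nra. }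
          nra. }
        assert (0 <= ((2 * K ^ 2 * ti - ti ^ 2 - K ^ 2) * (tj - K) + 2 * K * (ti - 1) * (K ^ 2 - ti))).
        { apply (Rmult_le_reg_l ti). lra. lra. }
        assert (0 <= (K - tj) * ((2 * K ^ 2 * ti - ti ^ 2 - K ^ 2) * (tj - K) + 2 * K * (ti - 1) * (K ^ 2 - ti)))
          by (apply Rmult_le_pos; lra).
        pose proof (gpoly_id K ti tj). nra. }
      nra. }
  apply (Rmult_le_reg_r (sK * sj * si)). repeat apply Rmult_lt_0_compat; auto.
  replace (K * (ti - 1) / (sK * si) * (sK * sj * si)) with (K * (ti - 1) * sj) by (field; lra).
  replace ((ti * tj - K) / (si * sj) * (sK * sj * si)) with ((ti * tj - K) * sK) by (field; lra).
  auto.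
Qed.

Lemma cf_pos K t : 1 < K -> 1 < t -> 0 < cf K t.
Proof.
  intros. unfold cf. apply Rdiv_lt_0_compat. nra.
  apply Rmult_lt_0_compat; apply sqrt_lt_R0; nra.
Qed.

Lemma cf_lt1 K t : 1 < K -> 1 < t -> t <= K -> cf K t < 1.
Proof.
  intros. unfold cf.
  set (st := sqrt (t * t - 1)). set (sK := sqrt (K * K - 1)).
  assert (0 < st) by (apply sqrt_lt_R0; nra).
  assert (0 < sK) by (apply sqrt_lt_R0; nra).
  assert (e1 : st * st = t * t - 1) by (apply sqrt_sqrt; nra).
  assert (e2 : sK * sK = K * K - 1) by (apply sqrt_sqrt; nra).
  apply (Rmult_lt_reg_r (sK * st)). nra.
  replace (K * (t - 1) / (sK * st) * (sK * st)) with (K * (t - 1)) by (field; lra).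
  rewrite Rmult_1_l. apply pos_sq_lt. nra. 2: nra.
  replace (sK * st * (sK * st)) with ((K * K - 1) * (t * t - 1)) by (rewrite <- e1, <- e2; ring).
  assert (0 < (t - 1) * (2 * K * K - t - 1)) by (apply Rmult_lt_0_compat; nra).
  nra.
Qed.

Lemma cf_big K t : 1 < K -> 7 <= t -> t <= K -> sqrt 3 / 2 <= cf K t.
Proof.
  intros. unfold cf.
  set (st := sqrt (t * t - 1)). set (sK := sqrt (K * K - 1)).
  assert (0 < st) by (apply sqrt_lt_R0; nra).
  assert (0 < sK) by (apply sqrt_lt_R0; nra).
  assert (e1 : st * st = t * t - 1) by (apply sqrt_sqrt; nra).
  assert (e2 : sK * sK = K * K - 1) by (apply sqrt_sqrt; nra).
  assert (sK <= K) by nra.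
  assert (s3 : sqrt 3 * sqrt 3 = 3) by (apply sqrt_sqrt; lra).
  assert (0 < sqrt 3) by (apply sqrt_lt_R0; lra).
  apply (Rmult_le_reg_r (sK * st)). nra.
  replace (K * (t - 1) / (sK * st) * (sK * st)) with (K * (t - 1)) by (field; lra).
  assert (sqrt 3 * st <= 2 * (t - 1)).
  { apply Rsqr_incr_0_var. unfold Rsqr. replace (sqrt 3 * st * (sqrt 3 * st)) with (3 * (t*t - 1)) by (transitivity (sqrt 3 * sqrt 3 * (st * st)); [rewrite s3, e1; ring | ring]). nra. lra. }
  assert (sqrt 3 / 2 * (sK * st) <= sqrt 3 / 2 * (K * st)).
  { apply Rmult_le_compat_l. lra. apply Rmult_le_compat_r; lra. }
  nra.
Qed.

(* two neighbors close to the center are impossible *)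
Lemma not_two_small K ti tj : 97 < K -> 1 <= ti -> ti < 7 -> 1 <= tj -> tj < 7 ->
  ti * tj - K > - (sqrt (ti * ti - 1) * sqrt (tj * tj - 1)) -> False.
Proof.
  intros.
  assert (sqrt (ti * ti - 1) < 7).
  { rewrite <- (sqrt_square 7) by lra. apply sqrt_lt_1; nra. }
  assert (sqrt (tj * tj - 1) < 7).
  { rewrite <- (sqrt_square 7) by lra. apply sqrt_lt_1; nra. }
  pose proof (sqrt_pos (ti * ti - 1)). pose proof (sqrt_pos (tj * tj - 1)).
  assert (e1 : sqrt (ti * ti - 1) * sqrt (ti * ti - 1) = ti * ti - 1) by (apply sqrt_sqrt; nra).
  assert (e2 : sqrt (tj * tj - 1) * sqrt (tj * tj - 1) = tj * tj - 1) by (apply sqrt_sqrt; nra).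
  set (a := sqrt (ti * ti - 1)) in *. set (b := sqrt (tj * tj - 1)) in *.
  assert (a * b < 48).
  { destruct (Rlt_le_dec (a * b) 48) as [h|h]; auto. exfalso.
    assert ((a * b) * (a * b) = (ti * ti - 1) * (tj * tj - 1)) by (rewrite <- e1, <- e2; ring).
    assert (0 <= ti * ti - 1 < 48) by nra. assert (0 <= tj * tj - 1 < 48) by nra.
    assert ((ti * ti - 1) * (tj * tj - 1) < 48 * 48) by nra. nra. }
  nra.
Qed.

Section Wheel.
Variable c : hpoint.
Definition sv p := sqrt (w1 c p ^ 2 + w2 c p ^ 2).
Definition th p := ang (w1 c p / sv p) (w2 c p / sv p).
Definition T p := tt c p.

Lemma sv_pos p : p <> c -> 0 < sv p.
Proof.
  intros ne. unfold sv.
  destruct (Req_dec (w1 c p) 0) as [h1|h1].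
  - destruct (Req_dec (w2 c p) 0) as [h2|h2].
    + exfalso. apply ne. apply w_zero; auto.
    + apply sqrt_lt_R0. pose proof (pow2_ge_0 (w1 c p)).
      assert (0 < w2 c p ^ 2) by (simpl; rewrite Rmult_1_r; apply (Rsqr_pos_lt (w2 c p)); auto). lra.
  - apply sqrt_lt_R0. pose proof (pow2_ge_0 (w2 c p)).
    assert (0 < w1 c p ^ 2) by (simpl; rewrite Rmult_1_r; apply (Rsqr_pos_lt (w1 c p)); auto). lra.
Qed.

Lemma sv_sq p : sv p * sv p = w1 c p * w1 c p + w2 c p * w2 c p.
Proof. unfold sv. rewrite sqrt_sqrt. ring. pose proof (pow2_ge_0 (w1 c p)); pose proof (pow2_ge_0 (w2 c p)); lra. Qed.

Lemma T_sq p : T p * T p = 1 + sv p * sv p.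
Proof. unfold T. rewrite sv_sq. apply tt_sq. Qed.

Lemma T_ge1 p : 1 <= T p.
Proof. apply tt_pos. Qed.

Lemma T_gt1 p : p <> c -> 1 < T p.
Proof. intros. pose proof (sv_pos p H). pose proof (T_sq p). pose proof (T_ge1 p). nra. Qed.

Lemma sv_T p : sv p = sqrt (T p * T p - 1).
Proof.
  rewrite T_sq. replace (1 + sv p * sv p - 1) with (sv p * sv p) by ring.
  rewrite sqrt_square; auto. unfold sv; apply sqrt_pos.
Qed.

Lemma unit_sq p : p <> c -> (w1 c p / sv p) ^ 2 + (w2 c p / sv p) ^ 2 = 1.
Proof.
  intros. pose proof (sv_pos p H). pose proof (sv_sq p).
  field_simplify; [|lra]. rewrite <- !Rsqr_pow2. unfold Rsqr. rewrite <- H1. field. lra.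
Qed.

Lemma dot_cos p q : p <> c -> q <> c ->
  w1 c p * w1 c q + w2 c p * w2 c q = sv p * sv q * cos (th p - th q).
Proof.
  intros hp hq. unfold th. rewrite cos_minus.
  destruct (ang_spec _ _ (unit_sq p hp)) as [cp [sp _]].
  destruct (ang_spec _ _ (unit_sq q hq)) as [cq [sq _]].
  rewrite cp, sp, cq, sq. pose proof (sv_pos p hp); pose proof (sv_pos q hq). field. lra.
Qed.

Lemma th_range p : p <> c -> - PI <= th p <= PI.
Proof. intros. destruct (ang_spec _ _ (unit_sq p H)) as [_ [_ h]]. exact h. Qed.

Lemma Aarg_T p q : Aarg p q = T p * T q - (w1 c p * w1 c q + w2 c p * w2 c q).
Proof. unfold T. apply Aarg_rel. Qed.

Lemma cos_ge_m1 p q : -1 <= cos (th p - th q).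
Proof. pose proof (COS_bound (th p - th q)). lra. Qed.

Variable K : R.
Hypothesis HK : 97 < K.

Lemma close_pair p q : p <> c -> q <> c -> K < T p -> T q <= K -> Aarg p q <= K ->
  close (th p) (th q) (acos (cf K (T q))).
Proof.
  intros hp hq Hp Hq Hpq. pose proof (T_gt1 q hq).
  apply close_of_cos; try apply th_range; auto.
  - pose proof (cf_pos K (T q)); pose proof (cf_lt1 K (T q)). split; lra.
  - pose proof (corner_ineq K (T q) (T p) ltac:(lra) H Hq Hp) as ci.
    rewrite <- !sv_T in ci. rewrite Aarg_T, dot_cos in Hpq by auto.
    pose proof (sv_pos p hp); pose proof (sv_pos q hq).
    assert ((T p * T q - K) / (sv p * sv q) <= cos (th p - th q)).
    { apply (Rmult_le_reg_r (sv p * sv q)). nra.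
      replace ((T p * T q - K) / (sv p * sv q) * (sv p * sv q)) with (T p * T q - K) by (field; lra).
      lra. }
    replace (T p * T q) with (T q * T p) in H2 by ring. lra.
Qed.

Definition beta p q := (T p * T q - K) / (sv p * sv q).

Lemma far_pair p q : p <> c -> q <> c -> Aarg p q > K ->
  cos (th p - th q) < beta p q.
Proof.
  intros hp hq Hpq. rewrite Aarg_T, dot_cos in Hpq by auto.
  pose proof (sv_pos p hp); pose proof (sv_pos q hq). unfold beta.
  apply (Rmult_lt_reg_r (sv p * sv q)). nra.
  replace ((T p * T q - K) / (sv p * sv q) * (sv p * sv q)) with (T p * T q - K) by (field; lra).
  lra.
Qed.

Lemma beta_le p q : p <> c -> q <> c -> T p <= K -> T q <= K -> beta p q <= cf K (T p).
Proof.
  intros. unfold beta. rewrite !sv_T. apply beta_le_cf; try lra; apply T_gt1; auto.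
Qed.

Lemma beta_sym p q : beta p q = beta q p.
Proof. unfold beta. f_equal; ring. Qed.

Lemma far_data p q : p <> c -> q <> c -> T p <= K -> T q <= K -> Aarg p q > K ->
  far (th p) (th q) (acos (beta p q)) /\ acos (cf K (T p)) <= acos (beta p q)
  /\ acos (cf K (T q)) <= acos (beta p q) /\ T p * T q - K > - (sv p * sv q).
Proof.
  intros hp hq Hp Hq Hpq.
  pose proof (far_pair p q hp hq Hpq) as fp.
  pose proof (cos_ge_m1 p q).
  pose proof (beta_le p q hp hq Hp Hq) as b1.
  pose proof (beta_le q p hq hp Hq Hp) as b2. rewrite <- beta_sym in b2.
  pose proof (cf_lt1 K (T p) ltac:(lra) (T_gt1 p hp) Hp).
  pose proof (cf_lt1 K (T q) ltac:(lra) (T_gt1 q hq) Hq).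
  split; [|split; [|split]].
  - apply far_of_cos; auto. lra.
  - apply acos_le; lra.
  - apply acos_le; lra.
  - assert (beta p q > -1) by lra. unfold beta in H2.
    pose proof (sv_pos p hp); pose proof (sv_pos q hq).
    apply (Rmult_lt_compat_r (sv p * sv q)) in H2; [|nra].
    replace ((T p * T q - K) / (sv p * sv q) * (sv p * sv q)) with (T p * T q - K) in H2 by (field; lra).
    lra.
Qed.

Lemma acos_small p : p <> c -> T p <= K -> acos (cf K (T p)) < PI / 2.
Proof.
  intros. rewrite <- acos_0. apply acos_lt. lra. apply cf_pos. lra. apply T_gt1; auto.
  left; apply cf_lt1; try lra; apply T_gt1; auto.
Qed.

Lemma acos_PI6 : acos (sqrt 3 / 2) = PI / 6.
Proof. rewrite <- cos_PI6. apply acos_cos. pose proof PI_RGT_0. split; lra. Qed.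

Lemma acos_tiny p : p <> c -> 7 <= T p -> T p <= K -> acos (cf K (T p)) <= PI / 6.
Proof.
  intros. rewrite <- acos_PI6. apply acos_le.
  assert (0 < sqrt 3) by (apply sqrt_lt_R0; lra). lra.
  apply cf_big; lra. left; apply cf_lt1; try lra; apply T_gt1; auto.
Qed.

Lemma wheel (n1 n2 n3 n4 q1 q2 q3 q4 : hpoint) :
  n1 <> c -> n2 <> c -> n3 <> c -> n4 <> c -> q1 <> c -> q2 <> c -> q3 <> c -> q4 <> c ->
  T n1 <= K -> T n2 <= K -> T n3 <= K -> T n4 <= K ->
  K < T q1 -> K < T q2 -> K < T q3 -> K < T q4 ->
  Aarg n1 n2 > K -> Aarg n1 n3 > K -> Aarg n1 n4 > K -> Aarg n2 n3 > K -> Aarg n2 n4 > K -> Aarg n3 n4 > K ->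
  Aarg q1 n1 <= K -> Aarg q1 n2 <= K -> Aarg q2 n2 <= K -> Aarg q2 n3 <= K ->
  Aarg q3 n3 <= K -> Aarg q3 n4 <= K -> Aarg q4 n4 <= K -> Aarg q4 n1 <= K -> False.
Proof.
  intros hn1 hn2 hn3 hn4 hq1 hq2 hq3 hq4 t1 t2 t3 t4 u1 u2 u3 u4 a12 a13 a14 a23 a24 a34
         b11 b12 b22 b23 b33 b34 b44 b41.
  destruct (far_data n1 n2 hn1 hn2 t1 t2 a12) as [f12 [x12 [y12 z12]]].
  destruct (far_data n1 n3 hn1 hn3 t1 t3 a13) as [f13 [x13 [y13 z13]]].
  destruct (far_data n1 n4 hn1 hn4 t1 t4 a14) as [f14 [x14 [y14 z14]]].
  destruct (far_data n2 n3 hn2 hn3 t2 t3 a23) as [f23 [x23 [y23 z23]]].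
  destruct (far_data n2 n4 hn2 hn4 t2 t4 a24) as [f24 [x24 [y24 z24]]].
  destruct (far_data n3 n4 hn3 hn4 t3 t4 a34) as [f34 [x34 [y34 z34]]].
  pose proof (close_pair q1 n1 hq1 hn1 u1 t1 b11) as c11.
  pose proof (close_pair q1 n2 hq1 hn2 u1 t2 b12) as c12.
  pose proof (close_pair q2 n2 hq2 hn2 u2 t2 b22) as c22.
  pose proof (close_pair q2 n3 hq2 hn3 u2 t3 b23) as c23.
  pose proof (close_pair q3 n3 hq3 hn3 u3 t3 b33) as c33.
  pose proof (close_pair q3 n4 hq3 hn4 u3 t4 b34) as c34.
  pose proof (close_pair q4 n4 hq4 hn4 u4 t4 b44) as c44.
  pose proof (close_pair q4 n1 hq4 hn1 u4 t1 b41) as c41.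
  set (A1 := acos (cf K (T n1))) in *. set (A2 := acos (cf K (T n2))) in *.
  set (A3 := acos (cf K (T n3))) in *. set (A4 := acos (cf K (T n4))) in *.
  assert (cs : forall a b x, close a b x -> close b a x).
  { intros a b x [k h]. exists (- k)%Z. rewrite opp_IZR.
    replace (b - a - 2 * - IZR k * PI) with (- (a - b - 2 * IZR k * PI)) by ring. rewrite Rabs_Ropp; auto. }
  assert (hs : A1 + A2 + A3 + A4 < PI).
  { pose proof PI_RGT_0.
    pose proof (acos_small n1 hn1 t1); pose proof (acos_small n2 hn2 t2);
    pose proof (acos_small n3 hn3 t3); pose proof (acos_small n4 hn4 t4).
    pose proof (T_ge1 n1); pose proof (T_ge1 n2); pose proof (T_ge1 n3); pose proof (T_ge1 n4).
    destruct (Rlt_le_dec (T n1) 7) as [s1|s1];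
    destruct (Rlt_le_dec (T n2) 7) as [s2|s2];
    destruct (Rlt_le_dec (T n3) 7) as [s3|s3];
    destruct (Rlt_le_dec (T n4) 7) as [s4|s4];
    try (exfalso; eapply not_two_small; [exact HK | | exact s1 | | exact s2 | rewrite <- !sv_T; exact z12]; assumption);
    try (exfalso; eapply not_two_small; [exact HK | | exact s1 | | exact s3 | rewrite <- !sv_T; exact z13]; assumption);
    try (exfalso; eapply not_two_small; [exact HK | | exact s1 | | exact s4 | rewrite <- !sv_T; exact z14]; assumption);
    try (exfalso; eapply not_two_small; [exact HK | | exact s2 | | exact s3 | rewrite <- !sv_T; exact z23]; assumption);
    try (exfalso; eapply not_two_small; [exact HK | | exact s2 | | exact s4 | rewrite <- !sv_T; exact z24]; assumption);
    try (exfalso; eapply not_two_small; [exact HK | | exact s3 | | exact s4 | rewrite <- !sv_T; exact z34]; assumption);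
    repeat match goal with
    | h : 7 <= T ?n |- _ => let hh := fresh "hh" in
        assert (hh : acos (cf K (T n)) <= PI / 6) by (apply acos_tiny; auto); clear h
    end; unfold A1, A2, A3, A4 in *; lra. }
  apply (circle4 (th n1) (th n2) (th n3) (th n4) A1 A2 A3 A4
          (acos (beta n1 n2)) (acos (beta n1 n3)) (acos (beta n1 n4))
          (acos (beta n2 n3)) (acos (beta n2 n4)) (acos (beta n3 n4))); auto.
  - apply (close_trans _ (th q1)); [apply cs; auto | auto].
  - apply (close_trans _ (th q2)); [apply cs; auto | auto].
  - apply (close_trans _ (th q3)); [apply cs; auto | auto].
  - apply (close_trans _ (th q4)); [apply cs; auto | auto].
  - apply acos_bound.
  - apply acos_bound.
  - apply acos_bound.
  - apply acos_bound.
Qed.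
End Wheel.

Lemma hyp_angle_aux ti tj si sj K : 1 <= K -> K * K - 1 <= 1/10 ->
  1 <= ti -> 1 <= tj -> ti <= K -> tj <= K -> ti * ti = 1 + si * si -> tj * tj = 1 + sj * sj ->
  0 < si -> 0 < sj -> si <= sj -> ti * tj - K <= 11/20 * (si * sj).
Proof.
  intros HK HK2 h1 h2 h3 h4 e1 e2 q1 q2 le.
  set (p := si * sj).
  assert (pp : 0 < p) by (unfold p; nra).
  assert (sisj : si * si <= p) by (unfold p; nra).
  assert (sj2 : sj * sj <= K * K - 1) by nra.
  assert (si2 : si * si <= K * K - 1) by nra.
  assert (p2 : p * p <= (1/10) * (1/10)).
  { unfold p. replace (si * sj * (si * sj)) with ((si * si) * (sj * sj)) by ring.
    assert (0 <= si * si) by nra. assert (0 <= sj * sj) by nra.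
    apply Rmult_le_compat; lra. }
  assert (p1' : p <= 1/10) by nra.
  assert (sq : (ti * tj) * (ti * tj) <= (K + 11/20 * p) * (K + 11/20 * p)).
  { replace ((ti * tj) * (ti * tj)) with ((1 + si * si) * (1 + sj * sj)) by (rewrite <- e1, <- e2; ring).
    assert (si * si * (sj * sj) = p * p) by (unfold p; ring).
    nra. }
  assert (0 <= ti * tj) by nra.
  nra.
Qed.

Lemma hyp_angle ti tj si sj K : 1 <= K -> K * K - 1 <= 1/10 ->
  1 <= ti -> 1 <= tj -> ti <= K -> tj <= K -> ti * ti = 1 + si * si -> tj * tj = 1 + sj * sj ->
  0 < si -> 0 < sj -> ti * tj - K <= 11/20 * (si * sj).
Proof.
  intros. destruct (Rle_lt_dec si sj).
  - eapply hyp_angle_aux; eauto.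
  - replace (ti * tj) with (tj * ti) by ring. replace (si * sj) with (sj * si) by ring.
    eapply hyp_angle_aux; eauto. lra.
Qed.

Lemma seven_leaves (c : hpoint) (K : R) (L : nat -> hpoint) :
  1 <= K -> K * K - 1 <= 1/10 ->
  (forall i, (i < 7)%nat -> L i <> c) ->
  (forall i, (i < 7)%nat -> Aarg c (L i) <= K) ->
  (forall i j, (i < 7)%nat -> (j < 7)%nat -> i <> j -> Aarg (L i) (L j) > K) -> False.
Proof.
  intros HK HK2 Hne Hc Hf.
  apply (seven_contra (fun i => w1 c (L i) / sv c (L i)) (fun i => w2 c (L i) / sv c (L i))).
  - intros i Hi. apply unit_sq. auto.
  - intros i j Hi Hj ne. unfold dt.
    pose proof (sv_pos c (L i) (Hne i Hi)); pose proof (sv_pos c (L j) (Hne j Hj)).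
    pose proof (Hf i j Hi Hj ne) as F. rewrite (Aarg_T c) in F.
    assert (ti : T c (L i) <= K) by (unfold T; rewrite tt_Aarg; auto).
    assert (tj : T c (L j) <= K) by (unfold T; rewrite tt_Aarg; auto).
    pose proof (hyp_angle (T c (L i)) (T c (L j)) (sv c (L i)) (sv c (L j)) K HK HK2
       (T_ge1 c _) (T_ge1 c _) ti tj (T_sq c _) (T_sq c _) H H0).
    apply (Rmult_lt_reg_r (sv c (L i) * sv c (L j))). nra.
    replace ((w1 c (L i) / sv c (L i) * (w1 c (L j) / sv c (L j)) +
              w2 c (L i) / sv c (L i) * (w2 c (L j) / sv c (L j))) * (sv c (L i) * sv c (L j)))
      with (w1 c (L i) * w1 c (L j) + w2 c (L i) * w2 c (L j)) by (field; lra).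
    lra.
Qed.

Lemma mkp_pos (y : R) : 0 < snd (0, Rmax 1 y).
Proof. simpl. pose proof (Rmax_l 1 y). lra. Qed.
Definition mkp (x y : R) : hpoint := exist (fun p : R * R => 0 < snd p) (x, Rmax 1 y)
  (ltac:(simpl; pose proof (Rmax_l 1 y); lra)).

Lemma Aarg_mkp x1 y1 x2 y2 : 1 <= y1 -> 1 <= y2 ->
  Aarg (mkp x1 y1) (mkp x2 y2) = 1 + ((x1 - x2) ^ 2 + (y1 - y2) ^ 2) / (2 * y1 * y2).
Proof. intros. unfold Aarg, mkp; simpl. rewrite !Rmax_right by lra. reflexivity. Qed.

Lemma mkp_inj x1 y1 x2 y2 : 1 <= y1 -> 1 <= y2 -> mkp x1 y1 = mkp x2 y2 -> x1 = x2 /\ y1 = y2.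
Proof.
  intros h1 h2 H. apply (f_equal (@proj1_sig _ _)) in H. simpl in H.
  rewrite !Rmax_right in H by lra. inversion H; auto.
Qed.

Lemma exp_upper x : 0 <= x < 1 -> exp x <= 1 / (1 - x).
Proof.
  intros [h0 h1]. destruct h0 as [h0|h0].
  - pose proof (exp_ineq1 (- x) ltac:(lra)).
    rewrite exp_Ropp in H. pose proof (exp_pos x).
    apply (Rmult_le_reg_r (1 - x)). lra.
    replace (1 / (1 - x) * (1 - x)) with 1 by (field; lra).
    assert (1 - x < / exp x) by lra.
    apply (Rmult_lt_compat_l (exp x)) in H1; auto. rewrite Rinv_r in H1 by lra. lra.
  - subst. rewrite exp_0. lra.
Qed.

Lemma exp_ge1 x : 0 <= x -> 1 <= exp x.
Proof. intros [h|h]. pose proof (exp_ineq1 x ltac:(lra)). lra. subst; rewrite exp_0; lra. Qed.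

Lemma Kc_eq x : Kc x = (exp x + / exp x) / 2.
Proof. unfold Kc. rewrite exp_Ropp. reflexivity. Qed.

Lemma Kc_small x : 0 <= x <= 1/11 -> 1 <= Kc x /\ Kc x * Kc x - 1 <= 1/10.
Proof.
  intros H. rewrite Kc_eq. set (E := exp x).
  assert (e1 : 1 <= E) by (apply exp_ge1; lra).
  assert (e2 : E <= 11/10).
  { pose proof (exp_upper x ltac:(lra)). unfold E.
    assert (1 / (1 - x) <= 11/10).
    { apply (Rmult_le_reg_r (1 - x)). lra. replace (1 / (1 - x) * (1 - x)) with 1 by (field; lra). lra. }
    lra. }
  assert (i1 : 0 < / E <= 1).
  { split. apply Rinv_0_lt_compat; lra. rewrite <- Rinv_1. apply Rinv_le_contravar; lra. }
  assert (i2 : E * / E = 1) by (field; lra).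
  assert (i3 : 10/11 <= / E).
  { replace (10/11) with (/ (11/10)) by (field). apply Rinv_le_contravar; lra. }
  assert (id1 : (E + / E) / 2 - 1 = (E - 1) ^ 2 * / E / 2) by (field; lra).
  assert (id2 : (E + / E) / 2 * ((E + / E) / 2) - 1 = ((E - / E) / 2) ^ 2) by (field; lra).
  split.
  - assert (0 <= (E - 1) ^ 2 * / E / 2) by (apply Rmult_le_pos; [apply Rmult_le_pos; [apply pow2_ge_0|lra]|lra]). lra.
  - rewrite id2. assert (0 <= (E - / E) / 2 <= 21/220) by (split; lra). nra.
Qed.

Lemma pow3_ge8 (n : nat) : (8 <= n)%nat -> 512 <= INR n ^ 3.
Proof.
  intros. assert (8 <= INR n) by (replace 8 with (INR 8) by (simpl; lra); apply le_INR; auto).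
  simpl. nra.
Qed.

Definition leaf7 (n : nat) (Hn : (8 <= n)%nat) (i : nat) : star_vertex n :=
  exist (fun j => (j < n)%nat) (S (i mod 7)) (ltac:(cbv beta; pose proof (Nat.mod_upper_bound i 7 ltac:(lia)); lia)).

Lemma part2 : forall n : nat, (8 <= n)%nat -> ~ HUDG (1 / INR n ^ 3) (star_vertex n) (star_adj n).
Proof.
  intros n Hn [f [Hinj Hadj]].
  set (r := 1 / INR n ^ 3).
  pose proof (pow3_ge8 n Hn) as h3.
  assert (hr : 0 <= r) by (unfold r; apply Rmult_le_pos; [lra|left; apply Rinv_0_lt_compat; lra]).
  assert (hr2 : 2 * r <= 1/11).
  { unfold r. unfold Rdiv. rewrite Rmult_1_l.
    assert (/ INR n ^ 3 <= / 512) by (apply Rinv_le_contravar; lra). lra. }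
  destruct (Kc_small (2 * r) ltac:(lra)) as [K1 K2].
  set (v0 := exist (fun i => (i < n)%nat) 0%nat ltac:(cbv beta; lia) : star_vertex n).
  apply (seven_leaves (f v0) (Kc (2 * r)) (fun i => f (leaf7 n Hn i)) K1 K2).
  - intros i Hi E. apply Hinj in E. apply (f_equal (@proj1_sig _ _)) in E. simpl in E. discriminate.
  - intros i Hi. apply adj_iff; auto. apply Hadj.
    + intro E. apply (f_equal (@proj1_sig _ _)) in E. simpl in E. discriminate.
    + unfold star_adj; simpl. split; [lia| left; reflexivity].
  - intros i j Hi Hj ne.
    destruct (Rle_lt_dec (Aarg (f (leaf7 n Hn i)) (f (leaf7 n Hn j))) (Kc (2 * r))) as [h|h]; [|lra].
    exfalso. apply adj_iff in h; auto. apply Hadj in h.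
    + unfold star_adj in h; simpl in h. lia.
    + intro E. apply (f_equal (@proj1_sig _ _)) in E. unfold leaf7 in E; cbn [proj1_sig] in E.
      rewrite (Nat.mod_small i 7 Hi), (Nat.mod_small j 7 Hj) in E. lia.
Qed.

Lemma gv_pf (k a b : nat) : (5 <= k)%nat -> (a <= 2)%nat -> (b <= 2)%nat -> (fst (a, b) < k /\ snd (a, b) < k)%nat.
Proof. simpl; lia. Qed.
Definition gv (k : nat) (Hk : (5 <= k)%nat) (a b : nat) (Ha : (a <= 2)%nat) (Hb : (b <= 2)%nat) : grid_vertex k :=
  exist (fun p : nat * nat => (fst p < k)%nat /\ (snd p < k)%nat) (a, b) (gv_pf k a b Hk Ha Hb).

Lemma Kc_2ln (N : R) : 1 <= N -> Kc (2 * ln N) = (N * N + / (N * N)) / 2.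
Proof.
  intros. rewrite Kc_eq. f_equal. replace (2 * ln N) with (ln N + ln N) by ring.
  rewrite exp_plus, exp_ln by lra. reflexivity.
Qed.

Lemma part3 : forall k : nat, (5 <= k)%nat ->
     ~ HUDG (ln (INR (k * k))) (grid_vertex k) (grid_adj k).
Proof.
  intros k Hk [f [Hinj Hadj]].
  set (N := INR (k * k)).
  assert (hN : 25 <= N).
  { unfold N. rewrite mult_INR. assert (5 <= INR k) by (replace 5 with (INR 5) by (simpl; lra); apply le_INR; auto). nra. }
  assert (hr : 0 <= ln N) by (rewrite <- ln_1; left; apply ln_increasing; lra).
  set (K := Kc (2 * ln N)).
  assert (HK : 97 < K).
  { unfold K. rewrite Kc_2ln by lra. assert (0 < / (N * N)) by (apply Rinv_0_lt_compat; nra). nra. }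
  assert (pos : forall u v, u <> v -> grid_adj k u v -> Aarg (f u) (f v) <= K).
  { intros u v ne h. apply adj_iff; auto. apply Hadj; auto. }
  assert (neg : forall u v, u <> v -> ~ grid_adj k u v -> Aarg (f u) (f v) > K).
  { intros u v ne h. destruct (Rle_lt_dec (Aarg (f u) (f v)) K) as [h'|h']; [|lra].
    exfalso. apply h. apply Hadj; auto. apply adj_iff; auto. }
  set (g := gv k Hk).
  set (c := f (g 1%nat 1%nat ltac:(lia) ltac:(lia))).
  assert (nc : forall a b Ha Hb, (a, b) <> (1%nat, 1%nat) -> f (g a b Ha Hb) <> c).
  { intros a b Ha Hb ne E. apply Hinj in E. apply (f_equal (@proj1_sig _ _)) in E. simpl in E. auto. }
  assert (tc : forall p, T c p = Aarg c p) by (intros; unfold T; apply tt_Aarg).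
  apply (wheel c K HK (f (g 2 1 ltac:(lia) ltac:(lia))%nat) (f (g 1 2 ltac:(lia) ltac:(lia))%nat)
           (f (g 0 1 ltac:(lia) ltac:(lia))%nat) (f (g 1 0 ltac:(lia) ltac:(lia))%nat)
           (f (g 2 2 ltac:(lia) ltac:(lia))%nat) (f (g 0 2 ltac:(lia) ltac:(lia))%nat)
           (f (g 0 0 ltac:(lia) ltac:(lia))%nat) (f (g 2 0 ltac:(lia) ltac:(lia))%nat));
  repeat match goal with
  | |- f _ <> c => apply nc; intro E; inversion E
  | |- T c _ <= K => rewrite tc; apply pos; [intro E; apply (f_equal (@proj1_sig _ _)) in E; simpl in E; inversion E | unfold grid_adj; simpl; lia]
  | |- K < T c _ => rewrite tc; apply neg; [intro E; apply (f_equal (@proj1_sig _ _)) in E; simpl in E; inversion E | unfold grid_adj; simpl; lia]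
  | |- Aarg _ _ <= K => apply pos; [intro E; apply (f_equal (@proj1_sig _ _)) in E; simpl in E; inversion E | unfold grid_adj; simpl; lia]
  | |- Aarg _ _ > K => apply neg; [intro E; apply (f_equal (@proj1_sig _ _)) in E; simpl in E; inversion E | unfold grid_adj; simpl; lia]
  end.
Qed.

Lemma star_eq n (u v : star_vertex n) : proj1_sig u = proj1_sig v -> u = v.
Proof. destruct u, v; simpl; intros; subst; f_equal; apply proof_irrelevance. Qed.

Lemma part4 : forall n : nat, (1 <= n)%nat -> HUDG (ln (INR n)) (star_vertex n) (star_adj n).
Proof.
  intros n Hn.
  set (N := INR n).
  assert (hN : 1 <= N) by (unfold N; replace 1 with (INR 1) by reflexivity; apply le_INR; auto).
  assert (hr : 0 <= ln N) by (rewrite <- ln_1; destruct hN as [h|h]; [left; apply ln_increasing; lra| rewrite h; lra]).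
  set (Tn := (N - / N) ^ 2).
  set (Y := 1 + Tn / 2).
  assert (hT : 0 <= Tn) by (apply pow2_ge_0).
  assert (hY : 1 <= Y) by (unfold Y; lra).
  assert (KY : Kc (2 * ln N) = Y).
  { rewrite Kc_2ln by lra. unfold Y, Tn. field. lra. }
  set (xf := fun i : nat => N * (2 * INR i - N) / 2).
  exists (fun v => if Nat.eqb (proj1_sig v) 0 then mkp 0 Y else mkp (xf (proj1_sig v)) 1).
  split.
  - intros [i Hi] [j Hj]. simpl.
    destruct (Nat.eqb_spec i 0) as [ei|ei]; destruct (Nat.eqb_spec j 0) as [ej|ej]; intro E.
    + apply star_eq; simpl; lia.
    + exfalso. apply mkp_inj in E; try lra. destruct E as [_ E].
      assert (Tn = 0) by (unfold Y in E; lra). unfold Tn in H.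
      assert (hh : (N - / N) * (N - / N) = 0) by (rewrite <- H; ring).
      assert (N - / N = 0) by (destruct (Rmult_integral _ _ hh); auto).
      assert (N * N = 1) by (field_simplify in H0; try lra; nra).
      assert (N = 1) by nra. unfold N in H2. replace 1 with (INR 1) in H2 by reflexivity.
      apply INR_eq in H2. lia.
    + exfalso. apply mkp_inj in E; try lra. destruct E as [_ E].
      assert (Tn = 0) by (unfold Y in E; lra). unfold Tn in H.
      assert (hh : (N - / N) * (N - / N) = 0) by (rewrite <- H; ring).
      assert (N - / N = 0) by (destruct (Rmult_integral _ _ hh); auto).
      assert (N * N = 1) by (field_simplify in H0; try lra; nra).
      assert (N = 1) by nra. unfold N in H2. replace 1 with (INR 1) in H2 by reflexivity.
      apply INR_eq in H2. lia.
    + apply mkp_inj in E; try lra. destruct E as [E _]. unfold xf in E.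
      assert (INR i = INR j) by (apply (Rmult_eq_reg_l N); [lra|lra]).
      apply INR_eq in H. apply star_eq; simpl; auto.
  - intros [i Hi] [j Hj] ne.
    assert (nij : i <> j) by (intro E; subst; apply ne; apply star_eq; reflexivity).
    unfold star_adj; simpl.
    rewrite adj_iff by auto. rewrite KY.
    assert (leafb : forall m, (m < n)%nat -> m <> 0%nat -> Aarg (mkp 0 Y) (mkp (xf m) 1) <= Y).
    { intros m Hm Hm0. rewrite Aarg_mkp by lra.
      assert (hm1 : 1 <= INR m) by (replace 1 with (INR 1) by reflexivity; apply le_INR; lia).
      assert (hm2 : INR m <= N - 1) by (unfold N; replace 1 with (INR 1) by reflexivity; rewrite <- minus_INR by lia; apply le_INR; lia).
      assert (h2 : 2 <= N) by lra.
      assert (q1 : (2 * INR m - N) ^ 2 <= (N - 2) ^ 2) by nra.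
      assert (q2 : N * (N - 2) <= Tn).
      { unfold Tn. replace ((N - / N) ^ 2) with (N * N - 2 + / N * / N) by (field; lra).
        assert (0 < / N) by (apply Rinv_0_lt_compat; lra). nra. }
      assert (q3 : (N * (N - 2)) ^ 2 <= Tn ^ 2).
      { apply pow_incr. split; nra. }
      assert (q4 : (xf m) ^ 2 <= Tn ^ 2 / 4).
      { unfold xf. replace ((N * (2 * INR m - N) / 2) ^ 2) with (N ^ 2 * (2 * INR m - N) ^ 2 / 4) by field.
        replace ((N * (N - 2)) ^ 2) with (N ^ 2 * (N - 2) ^ 2) in q3 by ring.
        assert (N ^ 2 * (2 * INR m - N) ^ 2 <= N ^ 2 * (N - 2) ^ 2) by (apply Rmult_le_compat_l; [apply pow2_ge_0| auto]).
        lra. }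
      apply (Rplus_le_reg_l (-1)).
      replace (-1 + (1 + ((0 - xf m) ^ 2 + (Y - 1) ^ 2) / (2 * Y * 1))) with (((xf m) ^ 2 + (Y - 1) ^ 2) / (2 * Y)) by (field; lra).
      apply (Rmult_le_reg_r (2 * Y)). lra.
      replace (((xf m) ^ 2 + (Y - 1) ^ 2) / (2 * Y) * (2 * Y)) with ((xf m) ^ 2 + (Y - 1) ^ 2) by (field; lra).
      unfold Y. nra. }
    destruct (Nat.eqb_spec i 0) as [ei|ei]; destruct (Nat.eqb_spec j 0) as [ej|ej].
    + exfalso; lia.
    + split; [intros _; apply leafb; auto | intros _; split; [lia | left; auto]].
    + split; [intros _ | intros _; split; [lia | right; auto]].
      assert (Aarg (mkp (xf i) 1) (mkp 0 Y) = Aarg (mkp 0 Y) (mkp (xf i) 1)).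
      { rewrite !Aarg_mkp by lra. f_equal. field_simplify_eq; try lra. }
      rewrite H. apply leafb; auto.
    + split; [intros [_ [h|h]]; lia |].
      intro h. exfalso. rewrite Aarg_mkp in h by lra.
      replace ((xf i - xf j) ^ 2) with (N ^ 2 * (INR i - INR j) ^ 2) in h by (unfold xf; field).
      assert (1 <= (INR i - INR j) ^ 2).
      { destruct (Nat.lt_trichotomy i j) as [l|[l|l]].
        - assert (INR i + 1 <= INR j). { rewrite <- S_INR. apply le_INR. lia. } nra.
        - exfalso; auto.
        - assert (INR j + 1 <= INR i). { rewrite <- S_INR. apply le_INR. lia. } nra. }
      assert (N ^ 2 * 1 <= N ^ 2 * (INR i - INR j) ^ 2) by (apply Rmult_le_compat_l; [apply pow2_ge_0|lra]).
      replace ((1 - 1) ^ 2) with 0 in h by ring.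
      unfold Y, Tn in h. replace ((N - / N) ^ 2) with (N * N - 2 + / N * / N) in h by (field; lra).
      assert (/ N <= 1) by (rewrite <- Rinv_1; apply Rinv_le_contravar; lra).
      assert (0 < / N) by (apply Rinv_0_lt_compat; lra).
      nra.
Qed.

Lemma nat_sq_ge1 a c : a <> c -> 1 <= (INR a - INR c) ^ 2.
Proof.
  intros. destruct (Nat.lt_trichotomy a c) as [l|[l|l]].
  - assert (INR a + 1 <= INR c) by (rewrite <- S_INR; apply le_INR; lia). nra.
  - lia.
  - assert (INR c + 1 <= INR a) by (rewrite <- S_INR; apply le_INR; lia). nra.
Qed.

Lemma nat_sq_ge4 a c : a <> c -> a <> S c -> c <> S a -> 4 <= (INR a - INR c) ^ 2.
Proof.
  intros. destruct (Nat.lt_trichotomy a c) as [l|[l|l]].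
  - assert (INR a + 2 <= INR c) by (replace 2 with (INR 2) by (simpl; lra); rewrite <- plus_INR; apply le_INR; lia). nra.
  - lia.
  - assert (INR c + 2 <= INR a) by (replace 2 with (INR 2) by (simpl; lra); rewrite <- plus_INR; apply le_INR; lia). nra.
Qed.

Lemma grid_m_adj a b c d : (a = c /\ (b = S d \/ d = S b)) \/ (b = d /\ (a = S c \/ c = S a)) ->
  (INR a - INR c) ^ 2 + (INR b - INR d) ^ 2 = 1.
Proof. intros [[-> [->| ->]]|[-> [->| ->]]]; rewrite ?S_INR; ring. Qed.

Lemma grid_m_nadj a b c d : (a, b) <> (c, d) -> ~ ((a = c /\ (b = S d \/ d = S b)) \/ (b = d /\ (a = S c \/ c = S a))) ->
  2 <= (INR a - INR c) ^ 2 + (INR b - INR d) ^ 2.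
Proof.
  intros ne na.
  destruct (Nat.eq_dec a c) as [ac|ac]; destruct (Nat.eq_dec b d) as [bd|bd].
  - subst; exfalso; auto.
  - subst. assert (4 <= (INR b - INR d) ^ 2) by (apply nat_sq_ge4; auto; intro; apply na; auto).
    pose proof (pow2_ge_0 (INR c - INR c)). lra.
  - subst. assert (4 <= (INR a - INR c) ^ 2) by (apply nat_sq_ge4; auto; intro; apply na; auto).
    pose proof (pow2_ge_0 (INR d - INR d)). lra.
  - pose proof (nat_sq_ge1 a c ac); pose proof (nat_sq_ge1 b d bd). lra.
Qed.

Lemma grid_eq k (u v : grid_vertex k) : proj1_sig u = proj1_sig v -> u = v.
Proof. destruct u, v; simpl; intros; subst; f_equal; apply proof_irrelevance. Qed.

Lemma part1 : forall k : nat, (1 <= k)%nat ->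
     HUDG (1 / INR (k * k) ^ 3) (grid_vertex k) (grid_adj k).
Proof.
  intros k Hk.
  set (kk := INR k). set (N := INR (k * k)).
  assert (hkk : 1 <= kk) by (unfold kk; replace 1 with (INR 1) by reflexivity; apply le_INR; auto).
  assert (eN : N = kk * kk) by (unfold N, kk; apply mult_INR).
  assert (hN1 : 1 <= N) by (rewrite eN; nra).
  assert (hN3 : 1 <= N ^ 3) by (simpl; nra).
  set (r := 1 / N ^ 3).
  assert (hr : 0 < r) by (unfold r; apply Rdiv_lt_0_compat; lra).
  set (x := 2 * r).
  assert (ex : x * N ^ 3 = 2) by (unfold x, r; field; lra).
  assert (hx0 : 0 < x) by (unfold x; lra).
  set (E := exp x).
  assert (hE : 1 < E) by (unfold E; pose proof (exp_ineq1 x ltac:(lra)); lra).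
  set (Tg := E + / E - 2).
  assert (eTg : Tg = (E - 1) ^ 2 * / E) by (unfold Tg; field; lra).
  assert (hTg : 0 < Tg) by (rewrite eTg; apply Rmult_lt_0_compat; [apply pow_lt; lra| apply Rinv_0_lt_compat; lra]).
  assert (KT : Kc (2 * r) = 1 + Tg / 2) by (rewrite Kc_eq; unfold Tg, E, x; field; apply Rgt_not_eq, exp_pos).
  set (s := sqrt Tg).
  assert (hs : 0 < s) by (apply sqrt_lt_R0; auto).
  assert (ss : s * s = Tg) by (apply sqrt_sqrt; lra).
  set (yf := fun b : nat => 1 + INR b * s).
  assert (hy : forall b, 1 <= yf b) by (intros; unfold yf; pose proof (pos_INR b); nra).
  exists (fun v => mkp (INR (fst (proj1_sig v)) * s) (yf (snd (proj1_sig v)))).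
  split.
  - intros [[a b] Hu] [[c d] Hv]. simpl. intro E0.
    apply mkp_inj in E0; try apply hy. destruct E0 as [e1 e2]. unfold yf in e2.
    assert (INR a = INR c) by (apply (Rmult_eq_reg_r s); lra).
    assert (INR b = INR d) by (apply (Rmult_eq_reg_r s); lra).
    apply INR_eq in H; apply INR_eq in H0. subst. apply grid_eq. reflexivity.
  - intros [[a b] Hu] [[c d] Hv] ne. simpl in Hu, Hv.
    assert (pne : (a, b) <> (c, d)) by (intro E0; apply ne; apply grid_eq; auto).
    unfold grid_adj; simpl.
    rewrite adj_iff by lra. rewrite KT. rewrite Aarg_mkp by apply hy.
    replace ((INR a * s - INR c * s) ^ 2 + (yf b - yf d) ^ 2) with (Tg * ((INR a - INR c) ^ 2 + (INR b - INR d) ^ 2))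
      by (unfold yf; rewrite <- ss; ring).
    set (m := (INR a - INR c) ^ 2 + (INR b - INR d) ^ 2).
    pose proof (hy b); pose proof (hy d).
    assert (iff1 : 1 + Tg * m / (2 * yf b * yf d) <= 1 + Tg / 2 <-> m <= yf b * yf d).
    { split; intro h.
      - assert (Tg * m / (2 * yf b * yf d) <= Tg / 2) by lra.
        apply (Rmult_le_compat_r (2 * yf b * yf d)) in H1; [|nra].
        replace (Tg * m / (2 * yf b * yf d) * (2 * yf b * yf d)) with (Tg * m) in H1 by (field; lra).
        nra.
      - assert (Tg * m / (2 * yf b * yf d) <= Tg / 2).
        { apply (Rmult_le_reg_r (2 * yf b * yf d)). nra.
          replace (Tg * m / (2 * yf b * yf d) * (2 * yf b * yf d)) with (Tg * m) by (field; lra). nra. }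
        lra. }
    rewrite iff1. split.
    + intro h. unfold m. rewrite grid_m_adj by auto. nra.
    + intro h. destruct (Classical_Prop.classic ((a = c /\ (b = S d \/ d = S b)) \/ (b = d /\ (a = S c \/ c = S a)))) as [hh|hh]; auto.
      exfalso. pose proof (grid_m_nadj a b c d pne hh) as m2. fold m in m2.
      assert (k2 : (2 <= k)%nat) by (destruct (Nat.eq_dec a c); destruct (Nat.eq_dec b d); subst; try (exfalso; auto; fail); lia).
      assert (hk2 : 2 <= kk) by (unfold kk; replace 2 with (INR 2) by (simpl; lra); apply le_INR; auto).
      assert (hx : x <= 1/2).
      { assert (4 <= N) by (rewrite eN; nra). assert (16 <= N * N) by nra.
        assert (64 <= N ^ 3) by (simpl; nra). nra. }
      assert (hE2 : E - 1 <= 2 * x).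
      { pose proof (exp_upper x ltac:(lra)). fold E in H1.
        assert (1 / (1 - x) <= 1 + 2 * x).
        { apply (Rmult_le_reg_r (1 - x)). lra. replace (1 / (1 - x) * (1 - x)) with 1 by (field; lra). nra. }
        lra. }
      assert (hsE : s <= E - 1).
      { unfold s. rewrite <- (sqrt_square (E - 1)) by lra. apply sqrt_le_1. lra. nra.
        rewrite eTg. assert (/ E <= 1) by (rewrite <- Rinv_1; apply Rinv_le_contravar; lra).
        assert (0 <= (E - 1) ^ 2) by apply pow2_ge_0. assert (0 < / E) by (apply Rinv_0_lt_compat; lra).
        simpl. rewrite Rmult_1_r. nra. }
      assert (hks : kk * s <= 1/8).
      { assert (16 <= kk * kk * kk * kk) by (assert (4 <= kk * kk) by nra; nra).
        assert (32 * kk <= N ^ 3).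
        { replace (N ^ 3) with (kk * (kk * kk * kk * kk) * kk) by (rewrite eN; ring). nra. }
        assert (kk * s <= kk * (2 * x)) by (apply Rmult_le_compat_l; lra).
        nra. }
      assert (hb : INR b <= kk) by (unfold kk; apply le_INR; lia).
      assert (hd : INR d <= kk) by (unfold kk; apply le_INR; lia).
      assert (yf b <= 9/8) by (unfold yf; pose proof (pos_INR b); nra).
      assert (yf d <= 9/8) by (unfold yf; pose proof (pos_INR d); nra).
      nra.
Qed.

Theorem theorem7 :
  (forall k : nat, (1 <= k)%nat ->
     HUDG (1 / INR (k * k) ^ 3) (grid_vertex k) (grid_adj k)) /\
  (forall n : nat, (8 <= n)%nat ->
     ~ HUDG (1 / INR n ^ 3) (star_vertex n) (star_adj n)) /\
  (forall k : nat, (5 <= k)%nat ->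
     ~ HUDG (ln (INR (k * k))) (grid_vertex k) (grid_adj k)) /\
  (forall n : nat, (1 <= n)%nat ->
     HUDG (ln (INR n)) (star_vertex n) (star_adj n)).
Proof.
  split; [exact part1 | split; [exact part2 | split; [exact part3 | exact part4]]].
Qed.
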